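(* Let $\mathcal G$ be a locally compact Hausdorff étale ample groupoid with compact metrizable unit space. Then $\mathcal G$ has groupoid strict comparison if and only if $\mathcal G$ has groupoid strict comparison for compact open sets.
   Context: Ample: basis of compact open bisections (bisection: subset of an open set on which $s,r$ restrict to homeomorphisms onto open subsets of $\mathcal G^{(0)}$). $M(\mathcal G)$: regular Borel probability measures on $\mathcal G^{(0)}$ with $\mu(s(U))=\mu(r(U))$ for measurable bisections $U$. For compact $K$ and open $V$ in $\mathcal G^{(0)}$, $K\prec_{\mathcal G}V$ means there are open bisections $A_1,\dots,A_n$ with $K\subseteq\bigcup s(A_i)$ and $r(A_i)$ pairwise disjoint subsets of $V$; for open $U,V$, $U\precsim_{\mathcal G}V$ means $K\prec_{\mathcal G}V$ for all compact $K\subseteq U$. Groupoid strict comparison: $U\precsim_{\mathcal G}V$ for all open $U,V\subseteq\mathcal G^{(0)}$ with $\mu(U)<\mu(V)$ for every $\mu\in M(\mathcal G)$. Groupoid strict comparison for compact open sets: the same condition required only for compact open $U,V\subseteq\mathcal G^{(0)}$. *)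

(* Defs.v *)
From HB Require Import structures.
From mathcomp Require Import all_boot all_order all_algebra.
From mathcomp Require Import all_classical all_reals all_analysis.
Set Implicit Arguments. Unset Strict Implicit. Unset Printing Implicit Defensive.
Import Order.TTheory GRing.Theory Num.Theory.
Local Open Scope classical_set_scope.
Local Open Scope ring_scope.

(* An (algebraic) groupoid with arrow space G and unit space X.
   [unit] is the inclusion X -> G of the units; [mul g h] is the product gh,
   defined (meaningful) when [src g = rng h]. *)
Record groupoid (G X : Type) := Groupoid {
  src : G -> X;
  rng : G -> X;
  unit : X -> G;
  mul : G -> G -> G;
  inv : G -> G;
  src_unit : forall x, src (unit x) = x;
  rng_unit : forall x, rng (unit x) = x;
  src_mul : forall g h, src g = rng h -> src (mul g h) = src h;
  rng_mul : forall g h, src g = rng h -> rng (mul g h) = rng g;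
  mulA : forall g h k, src g = rng h -> src h = rng k ->
    mul (mul g h) k = mul g (mul h k);
  mul_unit_l : forall g, mul (unit (rng g)) g = g;
  mul_unit_r : forall g, mul g (unit (src g)) = g;
  src_inv : forall g, src (inv g) = rng g;
  rng_inv : forall g, rng (inv g) = src g;
  mul_inv_r : forall g, mul g (inv g) = unit (rng g);
  mul_inv_l : forall g, mul (inv g) g = unit (src g)
}.

Section Defs.
Context {G X : topologicalType} (Gd : groupoid G X).

(* topological groupoid: all structure maps continuous, multiplication on
   composable pairs (product topology), and [unit] a topological embedding
   identifying X with the unit space G^(0) (subspace topology). *)
Definition topological_groupoid : Prop :=
  continuous (src Gd) /\ continuous (rng Gd) /\ continuous (inv Gd) /\
  {within [set p : G * G | src Gd p.1 = rng Gd p.2],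
     continuous (fun p : G * G => mul Gd p.1 p.2)} /\
  continuous (unit Gd) /\
  (forall x y, unit Gd x = unit Gd y -> x = y) /\
  (forall A : set X, open A ->
     exists B : set G, open B /\ unit Gd @` A = B `&` range (unit Gd)).

Definition homeo_onto_open (f : G -> X) (V : set G) : Prop :=
  (forall g h, V g -> V h -> f g = f h -> g = h) /\
  {within V, continuous f} /\
  (forall W : set G, open W -> open (f @` (W `&` V))).

Definition bisection (B : set G) : Prop :=
  exists V : set G, open V /\ B `<=` V /\
    homeo_onto_open (src Gd) V /\ homeo_onto_open (rng Gd) V.

Definition open_bisection (B : set G) : Prop := open B /\ bisection B.

Definition measurable_bisection (B : set G) : Prop :=
  <<s (@open G) >> B /\ bisection B.

Definition etale : Prop :=
  forall g : G, exists V : set G, open V /\ V g /\ homeo_onto_open (src Gd) V.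

Definition ample : Prop :=
  forall (W : set G) (g : G), open W -> W g ->
    exists B : set G, compact B /\ open_bisection B /\ B g /\ B `<=` W.

Definition gprec (K V : set X) : Prop :=
  exists (n : nat) (A : nat -> set G),
    (forall i, (i < n)%N -> open_bisection (A i)) /\
    K `<=` \bigcup_(i in `I_n) (src Gd @` A i) /\
    (forall i, (i < n)%N -> rng Gd @` A i `<=` V) /\
    (forall i j, (i < n)%N -> (j < n)%N -> i <> j ->
       rng Gd @` A i `&` rng Gd @` A j = set0).

Definition gprecsim (U V : set X) : Prop :=
  forall K : set X, compact K -> K `<=` U -> gprec K V.

End Defs.

Definition metrizable (R : realType) (X : topologicalType) : Prop :=
  exists d : X -> X -> R,
    (forall x y, 0 <= d x y) /\ (forall x y, d x y = 0 <-> x = y) /\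
    (forall x y, d x y = d y x) /\
    (forall x y z, d x z <= d x y + d y z) /\
    (forall A : set X, open A <->
       (forall x, A x -> exists2 e : R, 0 < e & [set y | d x y < e] `<=` A)).

Definition borel (X : ptopologicalType) := g_sigma_algebraType (@open X).

Section Measures.
Context (R : realType) {G : topologicalType} {X : ptopologicalType}
  (Gd : groupoid G X).
Local Open Scope ereal_scope.

Definition invariant_prob_measure
    (mu : {measure set (borel X) -> \bar R}) : Prop :=
  mu setT = 1 /\
  (forall A : set (borel X), measurable A ->
     mu A = ereal_inf [set mu U | U in [set U : set X | open U /\ A `<=` U]] /\
     mu A = ereal_sup [set mu K | K in [set K : set X | compact K /\ K `<=` A]]) /\
  (forall U : set G, measurable_bisection Gd U ->
     mu (src Gd @` U) = mu (rng Gd @` U)).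

Definition strict_comparison : Prop :=
  forall U V : set X, open U -> open V ->
    (forall mu, invariant_prob_measure mu -> mu U < mu V) ->
    gprecsim Gd U V.

Definition strict_comparison_compact_open : Prop :=
  forall U V : set X, compact U -> open U -> compact V -> open V ->
    (forall mu, invariant_prob_measure mu -> mu U < mu V) ->
    gprecsim Gd U V.

End Measures.

(* Main.v *)
From HB Require Import structures.
Require Import Defs.
From mathcomp Require Import all_boot all_order all_algebra.
From mathcomp Require Import all_classical all_reals all_analysis.
From mathcomp Require Import finmap.
From mathcomp Require Import lra.
Set Implicit Arguments. Unset Strict Implicit. Unset Printing Implicit Defensive.
Import Order.TTheory GRing.Theory Num.Theory.
Import numFieldNormedType.Exports.
Local Open Scope classical_set_scope.
Local Open Scope ring_scope.
Section Topo.
Context {X : ptopologicalType}.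

Definition clo (A : set X) := open A /\ closed A.

Lemma clo0 : clo set0. Proof. by split; [exact: open0|exact: closed0]. Qed.
Lemma cloU A B : clo A -> clo B -> clo (A `|` B).
Proof. by move=> [? ?] [? ?]; split; [exact: openU|exact: closedU]. Qed.
Lemma cloD A B : clo A -> clo B -> clo (A `\` B).
Proof.
move=> [? ?] [? ?]; split; rewrite setDE; [apply: openI => //|apply: closedI => //].
  by rewrite openC. by rewrite closedC.
Qed.
Lemma clo_setT : clo setT. Proof. by split; [exact: openT|exact: closedT]. Qed.

Hypothesis basis : forall (A : set X) x, open A -> A x ->
  exists C, clo C /\ C x /\ C `<=` A.

Lemma clo_between (K A : set X) : compact K -> open A -> K `<=` A ->
  exists C, clo C /\ K `<=` C /\ C `<=` A.
Proof.
move=> cK oA KA.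
have : forall x, exists C, A x -> clo C /\ C x /\ C `<=` A.
  move=> x; have [Ax|nAx] := pselect (A x).
    by have [C [? [? ?]]] := basis oA Ax; exists C.
  by exists set0.
move=> /choice [f Hf].
have : cover_compact K by have := @compact_cover X; move=> <-.
move=> /(_ _ K f).
case.
- by move=> i Ki; have [[]] := Hf i (KA _ Ki).
- by move=> x Kx; exists x => //; have [_ []] := Hf x (KA _ Kx).
move=> D' D'K KD; exists (\bigcup_(i in [set` D']) f i); split; last split=> //.
- split; first by apply: bigcup_open => i /D'K /set_mem Ki; have [[]] := Hf i (KA _ Ki).
  apply: closed_bigcup; first exact: finite_fset.
  by move=> i /D'K /set_mem Ki; have [[]] := Hf i (KA _ Ki).
- move=> x [i Di]; have Ki := set_mem (D'K _ Di); have [_ [_]] := Hf i (KA _ Ki); apply.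
Qed.

End Topo.
Section Metric.
Context {R : realType} {X : ptopologicalType} (d : X -> X -> R).
Hypotheses (d0 : forall x y, 0 <= d x y) (dE : forall x y, d x y = 0 <-> x = y)
  (dC : forall x y, d x y = d y x) (dT : forall x y z, d x z <= d x y + d y z)
  (dO : forall A : set X, open A <->
       (forall x, A x -> exists2 e : R, 0 < e & [set y | d x y < e] `<=` A)).

Lemma ball_open x e : open [set y | d x y < e].
Proof.
apply/dO => y /= dxy; exists (e - d x y); first by rewrite subr_gt0.
move=> z /= dyz; apply: (le_lt_trans (dT x y z)); by rewrite -ltrBrDl.
Qed.

Lemma metric_hausdorff : hausdorff_space X.
Proof.
rewrite open_hausdorff => x y nxy.
have dpos : 0 < d x y.
  rewrite lt_neqAle d0 andbT; apply/eqP => /esym /dE xy; by rewrite xy eqxx in nxy.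
exists ([set z | d x z < d x y / 2], [set z | d y z < d x y / 2]) => /=.
  split; apply/mem_set => /=; first by rewrite (proj2 (dE x x) erefl) divr_gt0.
  by rewrite (proj2 (dE y y) erefl) divr_gt0.
split; [exact: ball_open|exact: ball_open|].
apply/eqP; rewrite -subset0 => z [/= h1 h2].
have := dT x z y; rewrite (dC z y).
have -> : d x y = d x y / 2 + d x y / 2 by rewrite -splitr.
move=> h; have := ltrD h1 h2; rewrite ltNge h //.
Qed.

Hypothesis basis : forall (A : set X) x, open A -> A x ->
  exists C, clo C /\ C x /\ C `<=` A.
Hypothesis cX : compact [set: X].

Lemma open_seq_clo (A : set X) : open A ->
  exists C : nat -> set X, (forall n, clo (C n)) /\ A = \bigcup_n C n.
Proof.
move=> oA.
pose F n := [set x | forall y, d x y < n.+1%:R^-1 -> A y].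
have cF n : compact (F n).
  apply: (subclosed_compact _ cX) => //.
  rewrite -[F n]setCK closedC; apply/dO => x /= /existsNP [y].
  move=> /not_implyP [dxy nAy]; exists (n.+1%:R^-1 - d x y); first by rewrite subr_gt0.
  move=> z /= dxz Fz; apply: nAy; apply: Fz.
  apply: (le_lt_trans (dT z x y)); rewrite dC -ltrBrDr; done.
have FA n : F n `<=` A.
  by move=> x Fx; apply: Fx; rewrite (proj2 (dE x x) erefl).
have : forall n, exists C, clo C /\ F n `<=` C /\ C `<=` A.
  by move=> n; apply: clo_between => //; exact: basis.
move=> /choice [C HC]; exists C; split; first by move=> n; case: (HC n).
apply/seteqP; split; last by move=> x [n _ Cx]; have [_ [_]] := HC n; apply.
move=> x Ax; have [e e0 eA] := (proj1 (dO A) oA) x Ax.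
have [n] := ltr_add_invr e0; rewrite add0r => ne.
exists n => //; have [_ [+ _]] := HC n; apply => y dxy; apply: eA => /=.
exact: lt_trans ne.
Qed.

End Metric.
Section GBasis.
Context {G : topologicalType} {X : ptopologicalType} (Gd : groupoid G X).
Hypotheses (tG : topological_groupoid Gd) (eG : etale Gd) (aG : ample Gd)
  (hX : hausdorff_space X).

Lemma groupoid_basis (A : set X) x : open A -> A x ->
  exists C, clo C /\ C x /\ C `<=` A.
Proof.
move=> oA Ax.
have [cs [cr [ci [cm [cu [iu eu]]]]]] := tG.
have [V [oV [Vux [injV [_ opV]]]]] := eG (unit Gd x).
pose O := A `&` (unit Gd @^-1` V).
have oO : open O by apply: openI => //; exact: (open_comp (fun y _ => cu y)).
pose W := V `&` (src Gd @^-1` O).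
have oW : open W by apply: openI => //; exact: (open_comp (fun y _ => cs y)).
have Wux : W (unit Gd x) by split => //; rewrite /= src_unit.
have [B [cB [[oB [V' [oV' [BV' [[_ [_ opV']] _]]]]] [Bux BW]]]] := aG oW Wux.
exists (src Gd @` B); split; last split.
- have cC : compact (src Gd @` B).
    apply: continuous_compact => //; apply: continuous_subspaceT => y; exact: cs.
  split; last exact: compact_closed.
  have -> : src Gd @` B = src Gd @` (B `&` V') by rewrite setIidl.
  exact: opV'.
- by exists (unit Gd x) => //; rewrite src_unit.
- by move=> _ [g /BW [_ [Ag _]] <-].
Qed.

End GBasis.
Section UltraLim.
Context {R : realType} {I : Type} (F : set_system I) (FU : UltraFilter F).

Lemma ultra_cvg01 (f : I -> R) : (forall i, 0 <= f i <= 1) -> cvg (f @ F).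
Proof.
move=> f01.
have FF : ProperFilter F by exact: ultra_proper.
have : F (f @^-1` [set` `[0:R, 1]]).
  by apply: filterE => i; rewrite /= in_itv /=; have := f01 i.
move=> h01; have [p [_ cp]] := @segment_compact R 0 1 (f @ F) _ h01.
apply/cvg_ex; exists p => B Bp.
have [//|nB] := in_ultra_setVsetC (f @^-1` B) FU.
have : (f @ F) (~` B) by [].
move=> /(cp _ B) /(_ Bp) [z [nBz Bz]]; by [].
Qed.

Lemma ultra_lim01 (f : I -> R) : (forall i, 0 <= f i <= 1) ->
  0 <= lim (f @ F) <= 1.
Proof.
move=> f01; have FF : ProperFilter F by exact: ultra_proper.
have cf := ultra_cvg01 f01.
apply/andP; split; [apply: limr_ge => //|apply: limr_le => //];
  by apply: filterE => i; have /andP[] := f01 i.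
Qed.

End UltraLim.
Section Lam.
Context {R : realType} {X : ptopologicalType}.
Context {I : Type} (F : set_system I) (FU : UltraFilter F)
  (mu : I -> {measure set (borel X) -> \bar R}).
Hypothesis mu1 : forall i, mu i setT = 1%E.

Let FF : ProperFilter F. Proof. exact: ultra_proper. Qed.

Definition gm i (A : set X) : R := Num.min (fine (mu i A)) 1.
Definition lam (A : set X) : R := lim ((fun i => gm i A) @ F).

Lemma gm01 i A : 0 <= gm i A <= 1.
Proof.
rewrite /gm ge_min lexx orbT andbT le_min ler01 andbT.
by apply: fine_ge0; exact: measure_ge0.
Qed.

Lemma lam01 A : 0 <= lam A <= 1.
Proof. exact: ultra_lim01 (gm01 ^~ A). Qed.

Lemma cvg_gm A : cvg ((fun i => gm i A) @ F).
Proof. exact: ultra_cvg01 (gm01 ^~ A). Qed.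

Lemma gmE i (A : set (borel X)) : measurable A -> mu i A = (gm i A)%:E.
Proof.
move=> mA.
have h1 : (mu i A <= 1)%E.
  by rewrite -(mu1 i); apply: le_measure; [exact: mem_set|exact: (mem_set measurableT)|].
have h0 : (0 <= mu i A)%E by exact: measure_ge0.
have fA : mu i A \is a fin_num by rewrite ge0_fin_numE // (le_lt_trans h1) ?ltry.
rewrite /gm -[in LHS](fineK fA); congr EFin.
rewrite min_l //; by rewrite -lee_fin fineK.
Qed.

Lemma lamD (A B : set (borel X)) : measurable A -> measurable B ->
  A `&` B = set0 -> lam (A `|` B) = lam A + lam B.
Proof.
move=> mA mB AB.
have e : (fun i => gm i (A `|` B)) = (fun i => gm i A) + (fun i => gm i B).
  apply/funext => i /=; apply/EFin_inj.
  by rewrite -gmE ?measureU // ?EFinD -?gmE //; exact: measurableU.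
rewrite /lam e; apply: cvg_lim => //; apply: cvgD; exact: cvg_gm.
Qed.

Lemma lam_near (A B : set (borel X)) : measurable A -> measurable B ->
  (\forall i \near F, (mu i A <= mu i B)%E) -> lam A <= lam B.
Proof.
move=> mA mB h; rewrite -subr_ge0 /lam.
apply: (@cvgr_to_ge _ F FF _ ((fun i => gm i B) - (fun i => gm i A))).
  by apply: cvgB; exact: cvg_gm.
by apply: filterS h => i; rewrite !gmE // lee_fin /= subr_ge0.
Qed.

Lemma lam_le (A B : set (borel X)) : measurable A -> measurable B ->
  A `<=` B -> lam A <= lam B.
Proof.
move=> mA mB AB; apply: lam_near => //; apply: filterE => i.
by apply: le_measure => //; exact: mem_set.
Qed.

Lemma lam0 : lam set0 = 0.
Proof.
rewrite /lam (_ : (fun i => gm i set0) = fun=> 0) ?lim_cst //.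
by apply/funext => i; rewrite /gm measure0 /= min_l ?ler01.
Qed.

Lemma lamT : lam setT = 1.
Proof.
rewrite /lam (_ : (fun i => gm i setT) = fun=> 1) ?lim_cst //.
by apply/funext => i; rewrite /gm mu1 /= min_l.
Qed.

Lemma lam_eq (A B : set X) : (forall i, mu i A = mu i B) -> lam A = lam B.
Proof.
move=> h; rewrite /lam (_ : (fun i => gm i A) = (fun i => gm i B)) //.
by apply/funext => i; rewrite /gm h.
Qed.

End Lam.
Definition cloT (X : ptopologicalType) : Type := X.
HB.instance Definition _ (X : ptopologicalType) := Pointed.on (cloT X).
HB.instance Definition _ (X : ptopologicalType) :=
  @isRingOfSets.Build default_measure_display (cloT X) (@clo X)
    (@clo0 X) (@cloU X) (@cloD X).

Section LamC.
Context {R : realType} {X : ptopologicalType}.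
Hypotheses (cX : compact [set: X]) (hX : hausdorff_space X).
Context {I : Type} (F : set_system I) (FU : UltraFilter F)
  (mu : I -> {measure set (borel X) -> \bar R}).
Hypothesis mu1 : forall i, mu i setT = 1%E.

Local Notation lam := (lam F mu).

Lemma clo_meas (A : set X) : clo A -> measurable (A : set (borel X)).
Proof. by case=> oA _; apply: sub_sigma_algebra. Qed.

Lemma lam_bigU (Fs : nat -> set X) n :
  (forall k, measurable (Fs k : set (borel X))) -> trivIset setT Fs ->
  lam (\big[setU/set0]_(k < n) Fs k) = \sum_(k < n) lam (Fs k).
Proof.
move=> mF tF; elim: n => [|n IH]; first by rewrite !big_ord0 (lam0 FU).
rewrite !big_ord_recr /= (lamD FU mu1) ?IH //.
- by apply: bigsetU_measurable => k _.
- rewrite -bigcup_mkord; apply/seteqP; split => // x [[k /= kn Fkx] Fnx].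
  have := tF k n Logic.I Logic.I; rewrite /= => /(_ (ex_intro _ x (conj Fkx Fnx))) kn'.
  by rewrite kn' ltnn in kn.
Qed.

Lemma clo_seq_fin (Fs : nat -> set X) : (forall k, clo (Fs k)) ->
  trivIset setT Fs -> clo (\bigcup_k Fs k) ->
  exists N, forall i, (N <= i)%N -> Fs i = set0.
Proof.
move=> cF tF [_ cU].
have cpU : compact (\bigcup_k Fs k) by exact: (subclosed_compact cU cX).
have : cover_compact (\bigcup_k Fs k) by have := @compact_cover X; move=> <-.
move=> /(_ _ setT Fs) [].
- by move=> i _; case: (cF i).
- by move=> x [k _ Fkx]; exists k.
move=> D' _ UD.
exists (\max_(j <- D') j).+1 => i Ni; apply/seteqP; split => // x Fix.
have [j Dj Fjx] := UD x (ex_intro2 _ _ i Logic.I Fix).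
have ij : i = j by apply: (tF i j Logic.I Logic.I); exists x.
have : (j <= \max_(j <- D') j)%N by apply: leq_bigmax_seq.
by rewrite -ij leqNgt Ni.
Qed.

Definition lamc (A : set (cloT X)) : \bar R := (lam A)%:E.

Lemma lamc0 : lamc set0 = 0%E. Proof. by rewrite /lamc (lam0 FU). Qed.
Lemma lamc_ge0 A : (0 <= lamc A)%E.
Proof. by rewrite /lamc lee_fin; have /andP[] := lam01 FU mu A. Qed.

Lemma lamc_sigma : semi_sigma_additive lamc.
Proof.
move=> Fs mF tF mU.
have [N HN] := clo_seq_fin mF tF mU.
apply: cvg_near_cst; exists N => // n /= Nn.
rewrite big_mkord sumEFin /lamc -lam_bigU //; last by move=> k; apply: clo_meas; exact: mF.
congr (EFin (lam _)); rewrite -bigcup_mkord; apply/seteqP; split.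
  by move=> x [k _ Fkx]; exists k.
move=> x [k _ Fkx]; exists k => //=; rewrite ltnNge; apply/negP => nk.
by rewrite (HN k (leq_trans Nn nk)) in Fkx.
Qed.

HB.instance Definition _ := isMeasure.Build _ (cloT X) R lamc
  lamc0 lamc_ge0 lamc_sigma.


Hypothesis oseq : forall A : set X, open A ->
  exists C : nat -> set X, (forall n, clo (C n)) /\ A = \bigcup_n C n.

Local Open Scope ereal_scope.

Lemma borel_sub (A : set X) : <<s (@open X) >> A -> <<s (@clo X) >> A.
Proof.
apply: smallest_sub; first exact: smallest_sigma_algebra.
move=> O oO; have [C [cC ->]] := oseq oO.
apply: sigma_algebra_bigcup => n; apply: sub_sigma_algebra; exact: cC.
Qed.

Definition nu (A : set (borel X)) : \bar R := mu_ext lamc (A : set (cloT X)).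

Lemma nu0 : nu set0 = 0. Proof. exact: mu_ext0. Qed.
Lemma nu_ge0 A : 0 <= nu A. Proof. exact: mu_ext_ge0. Qed.

Lemma nu_cara (A : set (borel X)) : measurable A ->
  (mu_ext lamc).-caratheodory (A : set (cloT X)).
Proof.
move=> mA; apply: (@sub_caratheodory _ (cloT X) R lamc).
exact: borel_sub.
Qed.

Lemma nu_sigma : semi_sigma_additive nu.
Proof.
move=> Fs mF tF mUF; rewrite /nu.
apply: (@caratheodory_measure_sigma_additive R (cloT X) (mu_ext lamc) Fs) => //.
- by move=> i; exact: nu_cara.
- exact: nu_cara.
Qed.

HB.instance Definition _ := isMeasure.Build _ (borel X) R nu nu0 nu_ge0 nu_sigma.

Lemma nu_clo (A : set X) : clo A -> nu A = (lam A)%:E.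
Proof. by move=> cA; rewrite /nu measurable_mu_extE. Qed.

Lemma nuT : nu setT = 1.
Proof. rewrite nu_clo; last exact: clo_setT. by rewrite (lamT FU mu1). Qed.

Lemma bigsetU_clo (Fs : nat -> set X) n : (forall k, clo (Fs k)) ->
  clo (\big[setU/set0]_(k < n) Fs k).
Proof.
move=> cF; elim: n => [|n IH]; first by rewrite big_ord0; exact: clo0.
by rewrite big_ord_recr /=; apply: cloU.
Qed.

Lemma open_decomp (O : set X) : open O ->
  exists D : nat -> set X, [/\ forall n, clo (D n), trivIset setT D &
    O = \bigcup_n D n].
Proof.
move=> oO; have [C [cC ->]] := oseq oO.
exists (seqDU C); split; [|exact: trivIset_seqDU|exact: seqDU_bigcup_eq].
by move=> n; apply: cloD => //; exact: bigsetU_clo.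
Qed.

Lemma nu_open_le (O : set X) (t : R) : open O ->
  (forall C, clo C -> C `<=` O -> (lam C <= t)%R) -> nu O <= t%:E.
Proof.
move=> oO h; have [D [cD tD eO]] := open_decomp oO; rewrite eO.
have mD k : measurable (D k : set (borel X)) by apply: clo_meas.
have := @measure_sigma_additive _ R (borel X) nu D mD tD.
move=> /cvg_lim <- //; apply: lime_le; first by apply/cvg_ex; eexists; exact: measure_sigma_additive.
apply: nearW => n /=.
rewrite (eq_bigr (fun k => (lam (D k))%:E)); last by move=> k _; rewrite nu_clo.
rewrite big_mkord sumEFin lee_fin -lam_bigU //; apply: h; first exact: bigsetU_clo.
by rewrite -bigcup_mkord eO => x [k _ Dkx]; exists k.
Qed.

Lemma nu_fin (A : set (borel X)) : measurable A -> nu A = (fine (nu A))%:E.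
Proof.
move=> mA; rewrite fineK // ge0_fin_numE ?nu_ge0 //.
by apply: (le_lt_trans (_ : nu A <= nu setT)); [apply: le_measure => //; exact: mem_set | rewrite nuT ltry].
Qed.
Lemma nu_outer (A : set (borel X)) :
  nu A = ereal_inf [set nu U | U in [set U : set X | open U /\ A `<=` U]].
Proof.
apply/eqP; rewrite eq_le; apply/andP; split.
  apply: le_ereal_inf_tmp => _ [U [oU AU] <-].
  by rewrite /nu; apply: le_outer_measure.
rewrite [X in _ <= X]/nu /mu_ext.
apply: le_ereal_inf_tmp => _ [B [mB AB] <-].
apply: (@le_trans _ _ (nu (\bigcup_k B k))).
  apply: ereal_inf_lbound; exists (\bigcup_k B k) => //; split => //.
  by apply: bigcup_open => k _; case: (mB k).
rewrite /nu; apply: le_trans; first exact: outer_measure_sigma_subadditive.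
rewrite le_eqVlt; apply/orP; left; apply/eqP; apply: eq_eseriesr => k _.
exact: (@measurable_mu_extE _ R (cloT X) lamc (B k) (mB k)).
Qed.

Lemma nu_le1 (A : set (borel X)) : nu A <= 1.
Proof. by rewrite -nuT /nu; apply: le_outer_measure. Qed.

Lemma nuC (A : set (borel X)) : measurable A ->
  (fine (nu A) + fine (nu (~` A)) = 1)%R.
Proof.
move=> mA; apply: EFin_inj; rewrite EFinD -!nu_fin //; last exact: measurableC.
rewrite -measureU //; [|exact: measurableC|by rewrite setICr].
by rewrite setUCr; exact: nuT.
Qed.

Lemma nu_inner (A : set (borel X)) : measurable A ->
  nu A = ereal_sup [set nu K | K in [set K : set X | compact K /\ K `<=` A]].
Proof.
move=> mA; set s := ereal_sup _.
have s1 : s <= 1 by apply: ge_ereal_sup => _ [K _ <-]; exact: nu_le1.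
have s0 : 0 <= s.
  by apply: le_ereal_sup_tmp; exists 0 => //; exists set0; [split => //; exact: compact0|exact: nu0].
have sfin : s = (fine s)%:E by rewrite fineK // ge0_fin_numE // (le_lt_trans s1) ?ltry.
apply/eqP; rewrite eq_le; apply/andP; split; last first.
  by apply: ge_ereal_sup => _ [K [cK KA] <-]; rewrite /nu; apply: le_outer_measure.
have mC : measurable (~` A) by exact: measurableC.
have h : forall W : set X, open W -> ~` A `<=` W -> (1 - fine s <= fine (nu W))%R.
  move=> W oW AW.
  have mW : measurable (W : set (borel X)) by exact: sub_sigma_algebra.
  have : nu (~` W) <= s.
    apply: ereal_sup_ubound; exists (~` W) => //; split.
      apply: (subclosed_compact _ cX) => //; by rewrite closedC.
    by move=> x nWx; apply: contrapT => nAx; apply: nWx; exact: AW.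
  rewrite sfin nu_fin ?lee_fin; last exact: measurableC.
  have := nuC mW => e h'; lra.
have : ((1 - fine s)%:E <= nu (~` A)).
  rewrite nu_outer; apply: le_ereal_inf_tmp => _ [W [oW AW] <-].
  rewrite (nu_fin (sub_sigma_algebra oW)) lee_fin; exact: h.
rewrite nu_fin // lee_fin => h2.
rewrite sfin nu_fin // lee_fin; have := nuC mA; lra.
Qed.
Section Inv.
Context {G : topologicalType}.

Lemma nu_inv_le (f g : G -> X) (V U : set G) :
  continuous f -> continuous g -> open V -> U `<=` V ->
  homeo_onto_open f V -> homeo_onto_open g V ->
  (forall B, open B -> B `<=` V -> lam (f @` B) = lam (g @` B)) ->
  nu (g @` U) <= nu (f @` U).
Proof.
move=> cf cg oV UV [injf [_ opf]] [injg [_ opg]] hinv.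
have ofV : open (f @` V) by rewrite -[V in f @` V]setIid; exact: opf.
rewrite [X in _ <= X]/nu /mu_ext; apply: le_ereal_inf_tmp => _ [C [mC fUC] <-].
pose Bk k := V `&` f @^-1` (C k `&` f @` V).
have oBk k : open (Bk k).
  apply: openI => //; apply: open_comp => [u _|]; first exact: cf.
  by apply: openI => //; case: (mC k).
pose Rk k := g @` Bk k.
have oRk k : open (Rk k).
  rewrite /Rk -(@setIidl _ (Bk k) V); [exact: opg|by move=> u []].
apply: (@le_trans _ _ (nu (\bigcup_k Rk k))).
  rewrite /nu; apply: le_outer_measure => _ [u Uu <-].
  have [k _ Ckfu] := fUC _ (ex_intro2 _ _ u Uu erefl).
  exists k => //; exists u => //; split; first exact: UV.
  by split => //; exists u => //; exact: UV.
rewrite /nu; apply: le_trans; first exact: outer_measure_sigma_subadditive.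
apply: lee_nneseries => [k _ _|k _]; first exact: mu_ext_ge0.
have -> : lamc (C k) = (lam (C k))%:E by [].
apply: nu_open_le => // D cD DR.
pose B' := V `&` g @^-1` D.
have oB' : open B'.
  apply: openI => //; apply: open_comp => [u _|]; [exact: cg|by case: cD].
have B'B : B' `<=` Bk k.
  move=> u [Vu Dgu]; have [u' Bu' gu'] := DR _ Dgu.
  by rewrite -(injg u' u) //; case: Bu'.
have -> : D = g @` B'.
  apply/seteqP; split; last by move=> _ [u [_ Du] <-].
  move=> x Dx; have [u Bu gux] := DR _ Dx; exists u => //.
  by split; [case: Bu|rewrite /= gux].
rewrite -hinv //; last by move=> u [].
have ofB' : open (f @` B').
  rewrite -(@setIidl _ B' V); [exact: opf|by move=> u []].
apply: (lam_le FU mu1); [exact: sub_sigma_algebra|apply: clo_meas; exact: mC|].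
move=> _ [u /B'B [_ [Ck _]] <-]; exact: Ck.
Qed.

End Inv.
Lemma limit_measure {G : topologicalType} (Gd : groupoid G X) :
  topological_groupoid Gd ->
  (forall i (U : set G), measurable_bisection Gd U ->
     mu i (src Gd @` U) = mu i (rng Gd @` U)) ->
  exists nu' : {measure set (borel X) -> \bar R},
    invariant_prob_measure Gd nu' /\
    (forall A, clo A -> nu' A = (lam A)%:E) /\
    (forall (O : set X) t, open O ->
      (forall C, clo C -> C `<=` O -> (lam C <= t)%R) -> nu' O <= t%:E).
Proof.
move=> [cs [cr _]] hmu.
exists (nu : {measure set (borel X) -> \bar R}); split; last first.
  by split; [exact: nu_clo|exact: nu_open_le].
split; first exact: nuT.
split; first by move=> A mA; split; [exact: nu_outer|exact: nu_inner].
move=> U [_ [V [oV [UV [hs hr]]]]].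
have hinv : forall B, open B -> B `<=` V ->
    lam (src Gd @` B) = lam (rng Gd @` B).
  move=> B oB BV; apply: lam_eq => i; apply: hmu; split.
    exact: sub_sigma_algebra.
  by exists V.
apply/eqP; rewrite eq_le; apply/andP; split.
  apply: (nu_inv_le cr cs oV UV hr hs) => B oB BV; by rewrite hinv.
exact: (nu_inv_le cs cr oV UV hs hr hinv).
Qed.

End LamC.
Lemma gprec_mono {G : topologicalType} {X : topologicalType} (Gd : groupoid G X)
  (K V V' : set X) : gprec Gd K V -> V `<=` V' -> gprec Gd K V'.
Proof.
move=> [n [A [h1 [h2 [h3 h4]]]]] VV'; exists n, A; split => //; split => //.
by split => // i ni; apply: subset_trans VV'; exact: h3.
Qed.

Unset Implicit Arguments.
Local Close Scope ring_scope.
Theorem proposition5p5 (R : realType) (G : topologicalType)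
  (X : ptopologicalType) (Gd : groupoid G X) :
  topological_groupoid Gd ->
  locally_compact [set: G] -> hausdorff_space G ->
  etale Gd -> ample Gd ->
  compact [set: X] -> metrizable R X ->
  strict_comparison R Gd <-> strict_comparison_compact_open R Gd.
Proof.
move=> tG _ _ eG aG cX [d [d0 [dE [dC [dT dO]]]]].
have hX : hausdorff_space X := metric_hausdorff d0 dE dC dT dO.
have basis := groupoid_basis tG eG aG hX.
have oseq := open_seq_clo dE dC dT dO basis cX.
split.
  move=> H U V _ oU _ oV; exact: H.
move=> H U V oU oV Hmu K cK KU.
have [K' [cK' [KK' K'U]]] := clo_between basis cK oU KU.
have cpt (A : set X) : clo A -> compact A.
  by move=> [_ cA]; exact: (subclosed_compact cA cX).
suff [C [cC [CV HC]]] : exists C, clo C /\ C `<=` V /\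
    (forall mu : measure (borel X) R, invariant_prob_measure Gd mu -> (mu K' < mu C)%E).
  apply: gprec_mono CV.
  have := H K' C (cpt _ cK') (proj1 cK') (cpt _ cC) (proj1 cC) HC.
  by apply.
apply: contrapT => Hn.
pose I := {C : set X | clo C /\ C `<=` V}.
have : forall C : I, exists mu : measure (borel X) R,
    invariant_prob_measure Gd mu /\ (mu (sval C) <= mu K')%E.
  move=> [C [cC CV]] /=; apply: contrapT => hC; apply: Hn.
  exists C; split => //; split => // mu imu; rewrite ltNge; apply/negP => le.
  by apply: hC; exists mu.
move=> /choice [mu Hmu'].
pose Ev : set_system I := fun P => exists C0 : I, forall C : I,
  sval C0 `<=` sval C -> P C.
have I0 : I by exists set0; split; [exact: clo0|by []].
have EvF : ProperFilter Ev.
  constructor.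
    by move=> [C0 h]; exact: (h C0).
  constructor.
  - by exists I0.
  - move=> P Q [C1 h1] [C2 h2].
    have c12 : clo (sval C1 `|` sval C2) /\ sval C1 `|` sval C2 `<=` V.
      split; first by apply: cloU; [exact: (proj1 (svalP C1))|exact: (proj1 (svalP C2))].
      by move=> x [] ?; [apply: (proj2 (svalP C1))|apply: (proj2 (svalP C2))].
    exists (exist (fun C => clo C /\ C `<=` V) _ c12) => C /= h; split.
      by apply: h1 => x ?; apply: h; left.
    by apply: h2 => x ?; apply: h; right.
  - by move=> P Q PQ [C0 h]; exists C0 => C /h /PQ.
have [Fu [FU EvFu]] := ultraFilterLemma EvF.
have mu1 i : mu i setT = 1%E by have [[]] := Hmu' i.
have hinv i (W : set G) : measurable_bisection Gd W ->
    mu i (src Gd @` W) = mu i (rng Gd @` W).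
  by have [[_ [_ h]] _] := Hmu' i; exact: h.
have [nu [inu [nuC nuO]]] := limit_measure cX FU mu1 oseq tG hinv.
have := Hmu nu inu.
have mK' : measurable (K' : set (borel X)) by apply: sub_sigma_algebra; case: cK'.
have mU : measurable (U : set (borel X)) by exact: sub_sigma_algebra.
have : (nu V <= nu K')%E.
  rewrite (nuC K' cK'); apply: (nuO V _ oV) => C0 cC0 C0V.
  apply: (lam_near FU mu1); [apply: sub_sigma_algebra; exact: (proj1 cC0)|done|].
  apply: EvFu; exists (exist _ C0 (conj cC0 C0V)) => C /= C0C.
  apply: le_trans (proj2 (Hmu' C)).
  apply: le_measure; [apply: mem_set; apply: sub_sigma_algebra; exact: (proj1 cC0)|
    apply: mem_set; apply: sub_sigma_algebra; exact: (proj1 (proj1 (svalP C)))|exact: C0C].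
have : (nu K' <= nu U)%E by apply: le_measure => //; exact: mem_set.
move=> h1 h2 h3.
have := le_trans h2 h1; rewrite leNgt; by rewrite h3.
Qed.
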